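(* Fix $e\in\mathbb Z_{>0}$ and let $\mathsf Y_e(t)=\sum_{k\geqslant 0}y^{k+1}_{k+2+e}t^k\in\mathbb Z[[t]]$. Then \[ \mathsf Y_e(t)=\frac{\mathsf y_e(t)}{(1-t)^{2e+1}},\qquad \mathsf y_e(t)=\sum_{h=0}^{2e-1}\gamma^{(e)}_h t^h\in\mathbb Z[t], \] where for $0\leqslant h\leqslant 2e-1$ \[ \gamma^{(e)}_h=\sum_{j=0}^{h}(-1)^{h+j}\binom{2e+1}{h-j}y^{j+1}_{j+e+2}. \] In particular $\mathsf Y_e(t)$ is a rational function and $\mathsf y_e$ has degree at most $2e-1$.
   Context: Let $\mathbb N=\mathbb Z_{\geqslant 0}$ with the componentwise partial order on $\mathbb N^n$. For integers $n,d\geqslant 0$, an $(n-1)$-dimensional partition of size $d$ is a subset $\lambda\subset\mathbb N^n$ with $|\lambda|=d$ such that $\mathbf a\in\lambda$ and $\mathbf y\leqslant\mathbf a$ imply $\mathbf y\in\lambda$; $\mathrm P^n_d$ is the set of these. The embedding dimension $h_\lambda(1)$ is the number of elements of $\lambda$ whose coordinates sum to $1$. Define $y^k_d=|\{\lambda\in\mathrm P^k_d: h_\lambda(1)=k\}|$. *)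

(* Defs.v *)
From mathcomp Require Import all_boot all_algebra.
Set Implicit Arguments. Unset Strict Implicit. Unset Printing Implicit Defensive.
Import GRing.Theory.

(* (n-1)-dimensional partitions of size d: finite downward-closed subsets of
   N^n with d elements.  Every element a of such a set satisfies a_i < d
   (the box [0,a] lies in the set and has >= a_i+1 elements), so we encode
   points of N^n as functions 'I_n -> 'I_d (coordinates read as nats). *)
Definition pt_le (n d : nat) (y a : {ffun 'I_n -> 'I_d}) : bool :=
  [forall i, (y i <= a i)%N].

Definition is_partition (n d : nat) (lam : {set {ffun 'I_n -> 'I_d}}) : bool :=
  (#|lam| == d) &&
  [forall a in lam, forall y, pt_le y a ==> (y \in lam)].

Definition emb_dim (n d : nat) (lam : {set {ffun 'I_n -> 'I_d}}) : nat :=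
  #|[set a in lam | (\sum_(i < n) (a i : nat) == 1)%N]|.

Definition ycount (k d : nat) : nat :=
  #|[set lam : {set {ffun 'I_k -> 'I_d}} |
      is_partition lam && (emb_dim lam == k)]|.

Definition Ycoef (e k : nat) : int := (ycount k.+1 (k + 2 + e))%:Z.

Local Open Scope ring_scope.

Definition gamma (e h : nat) : int :=
  \sum_(j < h.+1) (-1) ^+ (h + j) * ('C(2 * e + 1, h - j))%:R
                   * (ycount j.+1 (j + e + 2))%:R.

Definition ye (e : nat) : {poly int} := \poly_(h < 2 * e) gamma e h.

(* Main.v *)
Require Import Defs.
From mathcomp Require Import all_boot all_algebra.
From mathcomp Require Import zify ring.
Set Implicit Arguments. Unset Strict Implicit. Unset Printing Implicit Defensive.

Section DimK.
Variables (K e : nat).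
Hypothesis he : 0 < e.
Local Notation d := (K + e).+1.
Local Notation Pt := {ffun 'I_K -> 'I_d}.

Definition psum (a : Pt) : nat := \sum_(i < K) (a i : nat).
Definition zpt : Pt := [ffun => ord0].
Definition upt (i : 'I_K) : Pt := [ffun t => if t == i then inord 1 else ord0].
Definition cut (a : Pt) (v : 'I_K -> nat) : Pt :=
  [ffun t => Ordinal (leq_ltn_trans (geq_minr (v t) (a t)) (ltn_ord (a t)))].
Definition valid (L : {set Pt}) := is_partition L && (emb_dim L == K).
Definition supp (L : {set Pt}) : {set 'I_K} :=
  [set i | [exists a in L, (0 < a i) && (2 <= psum a)]].

Lemma upt_val i t : (upt i t : nat) = (t == i).
Proof.
rewrite ffunE; case: eqP => _ //=; rewrite inordK //; lia.
Qed.

Lemma zpt_val t : (zpt t : nat) = 0.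
Proof. by rewrite ffunE. Qed.

Lemma cut_val (a : Pt) v t : (cut a v t : nat) = minn (v t) (a t).
Proof. by rewrite ffunE. Qed.

Lemma cut_le (a : Pt) v : pt_le (cut a v) a.
Proof. apply/forallP => t; rewrite cut_val; exact: geq_minr. Qed.

Lemma psum_cut (a : Pt) (v : 'I_K -> nat) : (forall t, v t <= a t) -> psum (cut a v) = \sum_t v t.
Proof.
move=> H; apply: eq_bigr => t _; rewrite cut_val; apply/minn_idPl; exact: H.
Qed.

Lemma sum_ind (i : 'I_K) : \sum_(t < K) ((t == i) : nat) = 1.
Proof. by rewrite (bigD1 i) //= eqxx big1 // => t /negbTE ->. Qed.

Lemma psum_upt i : psum (upt i) = 1.
Proof. rewrite /psum -(sum_ind i); apply: eq_bigr => t _; exact: upt_val. Qed.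

Lemma psum_zpt : psum zpt = 0.
Proof. by rewrite /psum big1 // => t _; rewrite zpt_val. Qed.

Lemma upt_inj : injective upt.
Proof.
move=> i j /ffunP /(_ i) /(congr1 val); rewrite /= !upt_val eqxx.
by case: eqP.
Qed.

Lemma psum0 (a : Pt) : psum a = 0 -> a = zpt.
Proof.
move/eqP; rewrite /psum sum_nat_eq0 => /forallP H.
apply/ffunP => t; apply/val_inj; rewrite /= zpt_val; exact/eqP/H.
Qed.

Lemma psum1 (a : Pt) : psum a = 1 -> exists i, a = upt i.
Proof.
move=> H.
have [i Hi]: exists i, 0 < a i.
  apply/existsP; apply: contraT; rewrite negb_exists => /forallP H0.
  suff : psum a = 0 by rewrite H.
  by apply/eqP; rewrite /psum sum_nat_eq0; apply/forallP => t; move: (H0 t); rewrite lt0n negbK.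
exists i; move: H; rewrite /psum (bigD1 i) //= => H.
have Hr : \sum_(t < K | t != i) (a t : nat) = 0.
  by move: H Hi; case: (a i : nat) => [|[|n]] //; rewrite add1n => -[].
move/eqP: Hr; rewrite sum_nat_eq0 => /forallP Hr.
apply/ffunP => t; apply/val_inj; rewrite /= upt_val.
case: eqP => [->|/eqP ne]; first by lia.
by move: (Hr t); rewrite ne => /eqP.
Qed.

Definition Us := [set upt i | i : 'I_K].

Lemma card_Us : #|Us| = K.
Proof. by rewrite card_imset ?card_ord //; exact: upt_inj. Qed.

Lemma emb_dimE (L : {set Pt}) : (emb_dim L == K) = (Us \subset L).
Proof.
have sub : [set a in L | \sum_(i < K) (a i : nat) == 1] \subset Us.
  apply/subsetP => a; rewrite inE => /andP [_ /eqP H].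
  by case: (psum1 H) => i ->; apply: imset_f.
apply/idP/idP.
- move=> /eqP H.
  have: Us \subset [set a in L | \sum_(i < K) (a i : nat) == 1].
    by move: (subset_leqif_card sub) => [_ <-]; rewrite /emb_dim in H; rewrite H card_Us.
  move=> /subsetP S; apply/subsetP => a /S; rewrite inE; by case/andP.
- move=> /subsetP S; apply/eqP; rewrite /emb_dim.
  suff -> : [set a in L | \sum_(i < K) (a i : nat) == 1] = Us by exact: card_Us.
  apply/eqP; rewrite eqEsubset sub /=; apply/subsetP => a Ha.
  rewrite inE S //=; case/imsetP: Ha => i _ ->; exact/eqP/psum_upt.
Qed.


Lemma psum_le (y a : Pt) : pt_le y a -> psum y <= psum a.
Proof. move/forallP => H; apply: leq_sum => t _; exact: H. Qed.

Lemma le_upt (y : Pt) i : pt_le y (upt i) -> y = zpt \/ y = upt i.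
Proof.
move=> H; have := psum_le H; rewrite psum_upt leq_eqVlt ltnS leqn0.
case/orP => [/eqP /psum1 [i' E]|/eqP /psum0 ->]; last by left.
right; rewrite E; congr upt; move: H; rewrite E => /forallP /(_ i').
rewrite !upt_val eqxx; by case: eqP.
Qed.

Lemma valid_intro (L : {set Pt}) : #|L| = d ->
  (forall a y, a \in L -> pt_le y a -> y \in L) -> Us \subset L -> valid L.
Proof.
move=> Hc Hd Hu; rewrite /valid emb_dimE Hu andbT /is_partition Hc eqxx /=.
apply/forall_inP => a Ha; apply/forallP => y; apply/implyP; exact: Hd.
Qed.

Section Valid.
Variable L : {set Pt}.
Hypothesis VL : valid L.

Lemma V_card : #|L| = d.
Proof. by case/andP: VL => /andP [/eqP -> _]. Qed.

Lemma V_down a y : a \in L -> pt_le y a -> y \in L.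
Proof.
case/andP: VL => /andP [_ /forallP H] _ Ha Hy.
by move: (H a); rewrite Ha /= => /forallP /(_ y); rewrite Hy.
Qed.

Lemma V_units : Us \subset L.
Proof. by case/andP: VL => _; rewrite emb_dimE. Qed.

Lemma V_upt i : upt i \in L.
Proof. by apply: (subsetP V_units); apply: imset_f. Qed.

Lemma V_zpt : zpt \in L.
Proof.
have : 0 < #|L| by rewrite V_card.
case/card_gt0P => a Ha; apply: V_down Ha _.
by apply/forallP => t; rewrite zpt_val.
Qed.

Definition S1 := [set a in L | 2 <= psum a].

Lemma card_S1 : #|S1| = e.
Proof.
have E : [set a in L | ~~ (2 <= psum a)] = zpt |: Us.
  apply/setP => a; rewrite !inE; apply/andP/idP.
  - move=> [_ H]; have : psum a <= 1 by lia.
    rewrite leq_eqVlt ltnS leqn0 => /orP [/eqP /psum1 [i ->]|/eqP /psum0 ->].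
      by rewrite imset_f ?orbT.
    by rewrite eqxx.
  - case/orP => [/eqP ->|/imsetP [i _ ->]].
      by rewrite V_zpt psum_zpt.
    by rewrite V_upt psum_upt.
have := cardsID [set a | 2 <= psum a] L.
rewrite V_card.
have -> : L :&: [set a | 2 <= psum a] = S1.
  by apply/setP => a; rewrite !inE.
have -> : L :\: [set a | 2 <= psum a] = zpt |: Us.
  by rewrite -E; apply/setP => a; rewrite !inE andbC.
rewrite cardsU1 card_Us.
have -> : zpt \notin Us.
  apply/imsetP => -[i _] /(congr1 psum); rewrite psum_zpt psum_upt //.
move=> /= H; suff Hs : forall s : nat, (s + (1 + K) = (K + e).+1)%N -> s = e by exact: Hs H.
move=> s; lia.
Qed.

Lemma V_bound a i : a \in L -> a i <= e.+1.
Proof.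
move=> Ha.
pose f (j : 'I_(a i - 1)) := cut a (fun s => if s == i then (j + 2)%N else 0).
have Hv (j : 'I_(a i - 1)) t : (if t == i then (j + 2)%N else 0) <= a t.
  case: eqP => [->|_] //; have := ltn_ord j; lia.
have Hf : injective f.
  move=> j1 j2 /ffunP /(_ i) /(congr1 val) /=; rewrite !cut_val.
  rewrite !(minn_idPl (Hv _ i)) eqxx => H; apply/val_inj; exact: (addIn H).
have : #|[set f j | j : 'I_(a i - 1)]| <= #|S1|.
  apply/subset_leq_card/subsetP => b /imsetP [j _ ->]; rewrite inE.
  rewrite (V_down Ha (cut_le _ _)) /= /f psum_cut //.
  rewrite (bigD1 i) //= eqxx big1 ?addn0 ?addn2 // => t /negbTE -> //.
rewrite card_imset // card_ord card_S1; lia.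
Qed.

Lemma V_two a i : a \in L -> 0 < a i -> 2 <= psum a ->
  exists2 b, b \in L & (0 < b i) && (psum b == 2).
Proof.
move=> Ha Hi Hs.
have [j [Hj1 Hj2]] : exists j, ((j == i) + 1 <= a j) /\ (j != i -> 1 <= a i).
  case: (leqP 2 (a i)) => H2; first by exists i; rewrite eqxx.
  have ai1 : (a i : nat) = 1 by lia.
  have [j Hj] : exists j, (j != i) && (0 < a j).
    apply/existsP; apply: contraT; rewrite negb_exists => /forallP H0.
    move: Hs; rewrite /psum (bigD1 i) //= ai1 big1 // => t Ht.
    by move: (H0 t); rewrite Ht /= lt0n negbK => /eqP.
  case/andP: Hj => Hj Hj'; exists j; rewrite (negbTE Hj); split => //; lia.
pose v s := ((s == i) + (s == j))%N.
have Hv t : v t <= a t.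
  rewrite /v; case: (eqVneq t i) => [->|ti].
    rewrite ?eqxx; case: (eqVneq i j) => [E|_] /=; last by rewrite addn0.
    by move: Hj1; rewrite -E eqxx.
  rewrite add0n; case: (eqVneq t j) => [E|] //=.
  by move: Hj1; rewrite -E (negbTE ti).
exists (cut a v); first exact: V_down Ha (cut_le _ _).
rewrite psum_cut // /v big_split /= !sum_ind eqxx andbT.
by rewrite cut_val (minn_idPl (Hv i)) /v eqxx.
Qed.

Lemma psum_pos a : 2 <= psum a -> exists i, 0 < a i.
Proof.
move=> H; apply/existsP; apply: contraT; rewrite negb_exists => /forallP H0.
suff : psum a = 0 by move=> E; rewrite E in H.
by apply/eqP; rewrite /psum sum_nat_eq0; apply/forallP => t; move: (H0 t); rewrite lt0n negbK.
Qed.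

Lemma supp_n0 : supp L != set0.
Proof.
have : 0 < #|S1| by rewrite card_S1.
case/card_gt0P => a; rewrite inE => /andP [Ha Hs].
case: (psum_pos Hs) => i Hi.
apply/set0Pn; exists i; rewrite inE; apply/existsP; exists a; by rewrite Ha Hi.
Qed.

Lemma card_supp : #|supp L| <= 2 * e.
Proof.
pose S2 := [set b in L | psum b == 2].
have HS2 : #|S2| <= e.
  apply: (leq_trans _ (eq_leq card_S1)); apply/subset_leq_card/subsetP => b; rewrite !inE.
  by case/andP => -> /eqP ->.
apply: (@leq_trans (\sum_(i in supp L) \sum_(b in S2) ((0 < b i) : nat))).
  rewrite -sum1_card; apply: leq_sum => i; rewrite inE => /existsP [a /andP [Ha /andP [Hi Hs]]].
  case: (V_two Ha Hi Hs) => b Hb /andP [Hbi Hb2].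
  rewrite (bigD1 b) /=; first by rewrite Hbi.
  by rewrite inE Hb.
apply: (@leq_trans (\sum_(i < K) \sum_(b in S2) ((0 < b i) : nat))).
  by rewrite [X in _ <= X](bigID (mem (supp L))) /= leq_addr.
rewrite exchange_big /=.
apply: (@leq_trans (\sum_(b in S2) 2)); last by rewrite sum_nat_const mulnC leq_mul2l HS2 orbT.
apply: leq_sum => b; rewrite inE => /andP [_ /eqP <-].
apply: leq_sum => t _; by case: (nat_of_ord (b t)).
Qed.

End Valid.
End DimK.

Section Bij.
Variables (K m e : nat).
Hypothesis he : 0 < e.
Variable sig : 'I_m -> 'I_K.
Hypothesis sig_inj : injective sig.

Lemma mK : m <= K.
Proof. by have := leq_card _ sig_inj; rewrite !card_ord. Qed.

Lemma Hle : (m + e).+1 <= (K + e).+1.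
Proof. by rewrite ltnS leq_add2r mK. Qed.

Local Notation PK := {ffun 'I_K -> 'I_(K + e).+1}.
Local Notation Pm := {ffun 'I_m -> 'I_(m + e).+1}.

Definition imS : {set 'I_K} := [set sig j | j : 'I_m].

Definition phi (b : Pm) : PK :=
  [ffun i => if [pick j | sig j == i] is Some j then widen_ord Hle (b j) else ord0].
Definition psi (a : PK) : Pm := [ffun j => inord (a (sig j))].

Lemma pick_sig j : [pick j' | sig j' == sig j] = Some j.
Proof.
case: pickP => [j' /eqP /sig_inj -> //|/(_ j)]; by rewrite eqxx.
Qed.

Lemma phi_sig (b : Pm) j : (phi b (sig j) : nat) = b j.
Proof. by rewrite ffunE pick_sig. Qed.

Lemma phi_out (b : Pm) i : i \notin imS -> (phi b i : nat) = 0.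
Proof.
move=> Hi; rewrite ffunE; case: pickP => [j /eqP E|//].
by move: Hi; rewrite -E imset_f.
Qed.

Lemma imSP i : reflect (exists j, i = sig j) (i \in imS).
Proof.
apply: (iffP imsetP) => [[j _ ->]|[j ->]]; by exists j.
Qed.

Lemma phi_inj : injective phi.
Proof.
move=> b b' /ffunP H; apply/ffunP => j; apply/val_inj.
by move: (H (sig j)) => /(congr1 val) /=; rewrite !phi_sig.
Qed.

Lemma phi_le (b b' : Pm) : pt_le (phi b) (phi b') = pt_le b b'.
Proof.
apply/forallP/forallP => H j.
  by move: (H (sig j)); rewrite !phi_sig.
case: (boolP (j \in imS)) => [/imSP [j' ->]|Hj]; first by rewrite !phi_sig.
by rewrite !phi_out.
Qed.

Lemma phi_psum (b : Pm) : psum (phi b) = psum b.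
Proof.
rewrite /psum (bigID (mem imS)) /= [X in _ + X]big1 ?addn0; last first.
  by move=> i Hi; rewrite phi_out.
rewrite /imS big_imset /=; last by move=> x y _ _; exact: sig_inj.
by apply: eq_big => // j; rewrite phi_sig.
Qed.

Lemma phi_upt j : phi (upt e j) = upt e (sig j).
Proof.
apply/ffunP => i; apply/val_inj => /=.
case: (boolP (i \in imS)) => [/imSP [j' ->]|Hi].
  rewrite phi_sig !upt_val //.
  by congr nat_of_bool; apply/eqP/eqP => [->|/sig_inj].
rewrite phi_out // upt_val //; case: eqP => // E.
by move: Hi; rewrite E imset_f.
Qed.

Lemma phi_zpt : phi (zpt m e) = zpt K e.
Proof.
apply/ffunP => i; apply/val_inj => /=; rewrite zpt_val.
case: (boolP (i \in imS)) => [/imSP [j' ->]|Hi]; last by rewrite phi_out.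
by rewrite phi_sig zpt_val.
Qed.

Lemma psiK (a : PK) : (forall i, i \notin imS -> (a i : nat) = 0) ->
  (forall j, a (sig j) < (m + e).+1) -> phi (psi a) = a.
Proof.
move=> H0 Hb; apply/ffunP => i; apply/val_inj => /=.
case: (boolP (i \in imS)) => [/imSP [j' ->]|Hi]; last by rewrite phi_out // H0.
by rewrite phi_sig ffunE inordK.
Qed.

Lemma phiK (b : Pm) : psi (phi b) = b.
Proof.
apply/ffunP => j; apply/val_inj; rewrite /= ffunE inordK phi_sig //.
Qed.


Definition Phi (L : {set Pm}) : {set PK} :=
  phi @: L :|: [set upt e i | i in ~: imS].

Lemma card_imS : #|imS| = m.
Proof. by rewrite card_imset ?card_ord. Qed.

Lemma phi_neq_upt b i : i \notin imS -> phi b != upt e i.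
Proof.
move=> Hi; apply/eqP => /ffunP /(_ i) /(congr1 val) /=.
by rewrite phi_out // upt_val // eqxx.
Qed.

Lemma card_Phi L : #|Phi L| = #|L| + (K - m).
Proof.
rewrite /Phi cardsU.
have -> : phi @: L :&: [set upt e i | i in ~: imS] = set0.
  apply/setP => a; rewrite !inE; apply/negbTE; apply/andP => -[/imsetP [b _ ->]].
  by case/imsetP => i; rewrite inE => Hi /eqP; rewrite (negbTE (phi_neq_upt _ Hi)).
rewrite cards0 subn0 card_imset; last exact: phi_inj.
rewrite card_imset; last exact: upt_inj.
have := cardsC imS; rewrite card_imS card_ord => H.
have Hs : forall k, m + k = K -> k = K - m by move=> k; lia.
by congr (_ + _); apply: Hs; exact: H.
Qed.

Lemma Phi_pre L : [set b | phi b \in Phi L] = L.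
Proof.
apply/setP => b; rewrite !inE mem_imset; last exact: phi_inj.
case: (b \in L) => //=; apply/negbTE/imsetP => -[i]; rewrite inE => Hi /eqP.
by rewrite (negbTE (phi_neq_upt _ Hi)).
Qed.

Lemma Phi_inj : injective Phi.
Proof. by move=> L L' E; rewrite -(Phi_pre L) -(Phi_pre L') E. Qed.

Lemma Phi_valid L : valid L -> supp L = setT -> valid (Phi L) /\ supp (Phi L) = imS.
Proof.
move=> VL SL; split.
  apply: valid_intro => //.
  - by rewrite card_Phi (V_card VL); have := mK; lia.
  - move=> a y; rewrite /Phi inE => /orP [/imsetP [b Hb ->]|/imsetP [i]] Hy.
      have Hy0 : forall i, i \notin imS -> (y i : nat) = 0.
        move=> i Hi; move/forallP: Hy => /(_ i); rewrite phi_out //; lia.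
      have Hyb : forall j, y (sig j) < (m + e).+1.
        move=> j; move/forallP: Hy => /(_ (sig j)); rewrite phi_sig => H.
        exact: leq_ltn_trans H (ltn_ord _).
      rewrite -(psiK Hy0 Hyb) in Hy *; rewrite phi_le in Hy.
      by rewrite inE imset_f // (V_down VL Hb Hy).
    move: Hy; rewrite inE => Hi -> Hy; case/le_upt: Hy => // ->; last by rewrite inE imset_f ?orbT // inE.
    by rewrite inE -phi_zpt imset_f // V_zpt.
  - apply/subsetP => a /imsetP [i _ ->]; rewrite inE.
    case: (boolP (i \in imS)) => [/imSP [j ->]|Hi]; last by rewrite imset_f ?orbT // inE.
    by rewrite -phi_upt imset_f // V_upt.
apply/setP => i; apply/idP/idP.
  rewrite inE => /existsP [a /andP [Ha /andP [H1 H2]]].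
  move: Ha; rewrite inE => /orP [/imsetP [b _ E]|/imsetP [i' _ E]]; last first.
    by move: H2; rewrite E psum_upt.
  apply: contraLR H1 => Hi; by rewrite E -leqNgt phi_out.
case/imSP => j ->.
have : j \in supp L by rewrite SL inE.
rewrite !inE => /existsP [b /andP [Hb /andP [H1 H2]]].
apply/existsP; exists (phi b); rewrite inE imset_f //= phi_sig H1 phi_psum H2 //=.
Qed.

Lemma Phi_surj lam : valid lam -> supp lam = imS ->
  exists L, [/\ valid L, supp L = setT & Phi L = lam].
Proof.
move=> VL SL.
have m0 : 0 < m.
  by rewrite -card_imS -SL card_gt0 supp_n0.
have key a : a \in lam -> (a \in phi @: [set b | phi b \in lam]) \/
                          (exists2 i, i \notin imS & a = upt e i).
  move=> Ha.
  case: (boolP [exists i, (i \notin imS) && (0 < a i)]).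
    case/existsP => i /andP [Hi Hai]; right; exists i => //.
    have Hs : ~~ (2 <= psum a).
      apply: contra Hi => H2; rewrite -SL inE; apply/existsP; exists a.
      by rewrite Ha Hai.
    have Hp : 0 < psum a.
      apply: leq_trans Hai _; rewrite /psum (bigD1 i) //=; exact: leq_addr.
    have /(psum1 he) [i' E] : psum a = 1 by lia.
    move: Hai; rewrite E upt_val //; by case: eqP => // ->.
  rewrite negb_exists => /forallP H0; left.
  have Hy0 : forall i, i \notin imS -> (a i : nat) = 0.
    by move=> i Hi; move: (H0 i); rewrite Hi /= lt0n negbK => /eqP.
  have Hyb : forall j, a (sig j) < (m + e).+1.
    move=> j; have := V_bound he VL (sig j) Ha; lia.
  by rewrite -(psiK Hy0 Hyb) imset_f // inE psiK.
pose L := [set b | phi b \in lam].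
have EP : Phi L = lam.
  apply/setP => a; apply/idP/idP.
    rewrite inE => /orP [/imsetP [b]|/imsetP [i _ ->]]; first by rewrite inE => Hb ->.
    exact: V_upt.
  by case/key => [H|[i Hi ->]]; rewrite inE ?H // imset_f ?orbT // inE.
exists L; split => //.
  apply: valid_intro => //.
  - have := card_Phi L; rewrite EP (V_card VL) => H; have := mK; lia.
  - move=> b y; rewrite !inE => Hb Hy; apply: (V_down VL Hb); by rewrite phi_le.
  - by apply/subsetP => b /imsetP [j _ ->]; rewrite inE phi_upt V_upt.
apply/setP => j; rewrite !inE.
have : sig j \in supp lam by rewrite SL imset_f.
rewrite inE => /existsP [a /andP [Ha /andP [H1 H2]]].
case: (key a Ha) => [/imsetP [b Hb E]|[i _ E]]; last by move: H2; rewrite E psum_upt.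
apply/existsP; exists b; rewrite Hb -phi_sig -E H1 -phi_psum -E H2 //=.
Qed.

Lemma count_bij : 0 < m ->
  #|[set lam : {set PK} | valid lam && (supp lam == imS)]| =
  #|[set L : {set Pm} | valid L && (supp L == setT)]|.
Proof.
move=> m0.
have -> : [set lam : {set PK} | valid lam && (supp lam == imS)] =
          Phi @: [set L : {set Pm} | valid L && (supp L == setT)].
  apply/setP => lam; rewrite inE; apply/andP/imsetP.
    move=> [VL /eqP SL]; case: (Phi_surj VL SL) => L [V1 S1 <-].
    by exists L => //; rewrite inE V1 S1 eqxx.
  move=> [L]; rewrite inE => /andP [VL /eqP SL] ->.
  by case: (Phi_valid VL SL) => -> ->.
by rewrite card_imset //; exact: Phi_inj.
Qed.

End Bij.


Section Count.
Variable e : nat.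
Hypothesis he : 0 < e.

Definition g (m : nat) : nat :=
  #|[set L : {set {ffun 'I_m -> 'I_(m + e).+1}} | valid L && (supp L == setT)]|.
Definition Fn (K : nat) : nat :=
  #|[set lam : {set {ffun 'I_K -> 'I_(K + e).+1}} | valid lam]|.
Definition h (K : nat) (U : {set 'I_K}) : nat :=
  #|[set lam : {set {ffun 'I_K -> 'I_(K + e).+1}} | valid lam && (supp lam == U)]|.

Lemma h_set0 K : h (set0 : {set 'I_K}) = 0.
Proof.
apply/eqP; rewrite cards_eq0; apply/eqP/setP => lam; rewrite !inE.
by apply/negbTE; apply/andP => -[VL /eqP SL]; move: (supp_n0 he VL); rewrite SL eqxx.
Qed.

Lemma g0 : g 0 = 0.
Proof.
apply/eqP; rewrite cards_eq0; apply/eqP/setP => L; rewrite !inE.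
apply/negbTE; apply/andP => -[VL /eqP SL]; move: (supp_n0 he VL).
have -> : supp L = set0 by apply/setP => -[].
by rewrite eqxx.
Qed.

Lemma g_big m : 2 * e < m -> g m = 0.
Proof.
move=> Hm; apply/eqP; rewrite cards_eq0; apply/eqP/setP => L; rewrite !inE.
apply/negbTE; apply/andP => -[VL /eqP SL]; move: (card_supp he VL).
by rewrite SL cardsT card_ord leqNgt Hm.
Qed.

Lemma enum_imS K (U : {set 'I_K}) : imS (enum_val (A := mem U)) = U.
Proof.
apply/setP => i; apply/imsetP/idP => [[j _ ->]|Hi]; first exact: enum_valP.
by exists (enum_rank_in Hi i); rewrite ?enum_rankK_in.
Qed.

Lemma h_eq K (U : {set 'I_K}) : h U = g #|U|.
Proof.
case: (eqVneq U set0) => [->|Un]; first by rewrite h_set0 cards0 g0.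
have m0 : 0 < #|U| by rewrite card_gt0.
rewrite /h -{1}(enum_imS U) count_bij //; exact: enum_val_inj.
Qed.

Lemma Fn_sum K : Fn K = \sum_(U : {set 'I_K}) h U.
Proof.
rewrite /Fn /h -sum1dep_card.
rewrite (eq_bigr (fun lam => \sum_(U : {set 'I_K}) ((supp lam == U) : nat))); last first.
  move=> lam _; rewrite (bigD1 (supp lam)) //= eqxx big1 // => U /negbTE.
  by rewrite eq_sym => ->.
rewrite exchange_big /=; apply: eq_bigr => U _.
rewrite -sum1dep_card big_mkcond /= [RHS]big_mkcond /=; apply: eq_bigr => lam _.
by case: (valid lam); case: (supp lam == U).
Qed.

Lemma Fn_binom K : Fn K = \sum_(k < K.+1) 'C(K, k) * g k.
Proof.
rewrite Fn_sum (eq_bigr (fun U : {set 'I_K} => g #|U|)); last by move=> U _; exact: h_eq.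
rewrite (eq_bigr (fun U : {set 'I_K} => \sum_(k < K.+1) ((#|U| == k) : nat) * g k)); last first.
  move=> U _; have HU : #|U| < K.+1 by rewrite ltnS; apply: leq_trans (max_card _) _; rewrite card_ord.
  rewrite (bigD1 (Ordinal HU)) //= eqxx mul1n big1 ?addn0 // => k Hk.
  suff -> : (#|U| == k) = false by [].
  by apply/negbTE; apply: contra Hk => /eqP E; apply/eqP/val_inj.
rewrite exchange_big /=; apply: eq_bigr => k _.
rewrite -big_distrl /=; congr (_ * _).
rewrite -[X in _ = 'C(X, _)](card_ord K) -card_draws -sum1dep_card [RHS]big_mkcond /=.
apply: eq_bigr => U _; by case: (#|U| == k).
Qed.

Lemma sum_trunc (f : nat -> nat) n N : n <= N -> (forall k, n <= k -> f k = 0) ->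
  \sum_(k < N) f k = \sum_(k < n) f k.
Proof.
move=> HnN Hf; rewrite -!(big_mkord xpredT) (big_cat_nat (leq0n n) HnN) /=.
rewrite [X in _ + X]big_nat_cond [X in _ + X]big1 ?addn0 // => k /andP [/andP [Hk _] _]; exact: Hf.
Qed.

Lemma Fn_poly K : Fn K = \sum_(k < (2 * e).+1) 'C(K, k) * g k.
Proof.
rewrite Fn_binom -(@sum_trunc (fun k => 'C(K, k) * g k) K.+1 (K.+1 + (2 * e).+1)) ?leq_addr //.
  rewrite (@sum_trunc (fun k => 'C(K, k) * g k) (2 * e).+1 (K.+1 + (2 * e).+1)) ?leq_addl //.
  by move=> k Hk; rewrite g_big ?muln0.
by move=> k Hk; rewrite bin_small.
Qed.

Lemma Fn0 : Fn 0 = 0.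
Proof. by rewrite Fn_binom big_ord_recl big_ord0 bin0 g0. Qed.

End Count.

Import GRing.Theory.
Local Open Scope ring_scope.

Definition Dr (r : nat) (f : nat -> int) (x : nat) : int :=
  \sum_(i < r.+1) (-1) ^+ i * ('C(r, i))%:R * f (x + r - i)%N.

Lemma Dr_S r f x : Dr r.+1 f x = Dr r f x.+1 - Dr r f x.
Proof.
rewrite /Dr big_ord_recl /= bin0 mulr1 expr0 mul1r subn0.
rewrite (eq_bigr (fun i : 'I_r.+1 =>
   - ((-1) ^+ i * ('C(r, i.+1))%:R * f (x + r - i)%N) - (-1) ^+ i * ('C(r, i))%:R * f (x + r - i)%N)); last first.
  move=> i _; rewrite /bump /= add1n binS natrD exprS.
  have -> : (x + r.+1 - i.+1 = x + r - i)%N by rewrite addnS subSS.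
  by rewrite mulN1r; ring.
have E1 : \sum_(i < r.+1) (-1) ^+ i * ('C(r, i))%:R * f (x.+1 + r - i)%N =
  f (x + r.+1)%N - \sum_(i < r.+1) (-1) ^+ i * ('C(r, i.+1))%:R * f (x + r - i)%N.
  rewrite big_ord_recl /= bin0 mulr1 expr0 mul1r subn0 addSn -addnS.
  rewrite [\sum_(i < r.+1) _]big_ord_recr /= bin_small // mulr0 mul0r addr0.
  rewrite -sumrN; congr (_ + _); apply: eq_bigr => i _.
  rewrite /bump /= add1n exprS mulN1r !mulNr; congr (- _).
  by rewrite addnS subSS.
rewrite E1 sumrB sumrN; ring.
Qed.

Lemma Dr_binom r m x :
  Dr r (fun k => ('C(k, m))%:R) x = if (r <= m)%N then ('C(x, m - r))%:R else 0.
Proof.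
elim: r m x => [|r IH] m x.
  by rewrite /Dr big_ord1 /= expr0 bin0 !mul1r addn0 !subn0.
rewrite Dr_S !IH.
case: (ltngtP r m) => H.
- have -> : (m - r = (m - r.+1).+1)%N by lia.
  rewrite binS natrD; ring.
- by rewrite subrr.
- by rewrite H subnn !bin0 subrr.
Qed.

Lemma Dr_binom0 r m x : (m < r)%N -> Dr r (fun k => ('C(k, m))%:R) x = 0.
Proof. by move=> H; rewrite Dr_binom leqNgt H. Qed.

Lemma Dr_lin r (n : nat) (c : nat -> int) x :
  Dr r (fun k => \sum_(j < n) c j * ('C(k, j))%:R) x =
  \sum_(j < n) c j * Dr r (fun k => ('C(k, j))%:R) x.
Proof.
rewrite /Dr (eq_bigr (fun i : 'I_r.+1 => \sum_(j < n) c j * ((-1) ^+ i * ('C(r, i))%:R * ('C((x + r - i)%N, j))%:R))).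
  rewrite exchange_big /=; apply: eq_bigr => j _; by rewrite mulr_sumr.
by move=> i _; rewrite mulr_sumr; apply: eq_bigr => j _; rewrite mulrCA.
Qed.

Lemma coef1X r i : ((1 - 'X) ^+ r : {poly int})`_i = (-1) ^+ i * ('C(r, i))%:R.
Proof.
rewrite exprBn coef_sum.
rewrite (eq_bigr (fun j : 'I_r.+1 => ((-1) ^+ j * ('C(r, j))%:R) * ((i == j)%:R))); last first.
  move=> j _; rewrite expr1n mulr1 coefMn.
  have -> : ((-1) ^+ j * 'X^j : {poly int}) = ((-1) ^+ j)%:P * 'X^j.
    by rewrite polyC_exp polyCN.
  rewrite coefCM coefXn -mulr_natr; ring.
case: (ltnP i r.+1) => Hi.
  rewrite (bigD1 (Ordinal Hi)) //= eqxx mulr1 big1 ?addr0 // => j Hj.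
  suff -> : (i == j) = false by rewrite mulr0.
  by apply/negbTE; apply: contra Hj => /eqP E; apply/eqP/val_inj.
rewrite bin_small // mulr0 big1 // => j _.
suff -> : (i == j) = false by rewrite mulr0.
apply/negbTE; have := ltn_ord j; lia.
Qed.

Lemma Dr_ext r f f' x : (forall k, f k = f' k) -> Dr r f x = Dr r f' x.
Proof. by move=> H; apply: eq_bigr => i _; rewrite H. Qed.

Lemma sum_trunc_int (f : nat -> int) n N : (n <= N)%N -> (forall k, (n <= k)%N -> f k = 0) ->
  \sum_(k < N) f k = \sum_(k < n) f k.
Proof.
move=> HnN Hf; rewrite -!(big_mkord xpredT) (big_cat_nat (leq0n n) HnN) /=.
rewrite [X in _ + X]big_nat_cond [X in _ + X]big1 ?addr0 // => k /andP [/andP [Hk _] _]; exact: Hf.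
Qed.


Lemma yF e K d : d = (K + e).+1 -> ycount K d = Fn e K.
Proof. by move=> ->. Qed.

Lemma YF e k : Ycoef e k = (Fn e k.+1)%:Z.
Proof. rewrite /Ycoef (@yF e k.+1 (k + 2 + e)) //; lia. Qed.

Unset Implicit Arguments.

Theorem theorem3p4 (e : nat) (he : (0 < e)%N) :
  forall N : nat,
    \sum_(i < N.+1) ((1 - 'X) ^+ (2 * e + 1) : {poly int})`_i * Ycoef e (N - i)
    = (ye e)`_N.
Proof.
move=> N.
rewrite /ye coef_poly.
case: (ltnP N (2 * e)) => HN.
  rewrite /gamma (reindex_inj rev_ord_inj) /=; apply: eq_bigr => j _.
  have Hj : (j <= N)%N by rewrite -ltnS ltn_ord.
  rewrite coef1X subSS (subKn Hj) YF natz.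
  rewrite (@yF e j.+1 (j + e + 2)); last lia.
  rewrite -signr_odd (oddB Hj) -[in RHS]signr_odd oddD.
  by rewrite natz.
pose c (i : nat) : int := (-1) ^+ i * ('C(2 * e + 1, i))%:R.
rewrite (eq_bigr (fun i : 'I_N.+1 => c i * (Fn e (N.+1 - i))%:Z)); last first.
  move=> i _; rewrite coef1X YF subSn; first by [].
  by rewrite -ltnS ltn_ord.
have E1 : \sum_(i < N.+1) c i * (Fn e (N.+1 - i))%:Z =
          \sum_(i < N.+2) c i * (Fn e (N.+1 - i))%:Z.
  rewrite [RHS]big_ord_recr /= subnn (Fn0 he) mulr0 addr0; by [].
rewrite E1 (@sum_trunc_int (fun i => c i * (Fn e (N.+1 - i))%:Z) (2 * e + 1).+1); last 2 first.
- lia.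
- by move=> k Hk; rewrite /c bin_small ?mulr0 ?mul0r.
have -> : \sum_(i < (2 * e + 1).+1) c i * (Fn e (N.+1 - i))%:Z
   = Dr (2 * e + 1) (fun k => (Fn e k)%:Z) (N.+1 - (2 * e + 1)).
  apply: eq_bigr => i _; rewrite /c.
  have -> : (N.+1 - (2 * e + 1) + (2 * e + 1) - i = N.+1 - i)%N.
    have := ltn_ord i; lia.
  by [].
rewrite (@Dr_ext _ _ (fun k => \sum_(m < (2 * e).+1) ((g e m)%:Z) * ('C(k, m))%:R)); last first.
  move=> k; rewrite (Fn_poly he) -natz natr_sum; apply: eq_bigr => m _.
  by rewrite natrM mulrC natz.
rewrite (@Dr_lin _ _ (fun m => (g e m)%:Z)) big1; first by [].
move=> m _; rewrite Dr_binom0 ?mulr0 //.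
have := ltn_ord m; lia.
Qed.
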